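(* For $i,j\in I^+$ with $i\le j$, $[\mathfrak X_{-j_R},[\mathfrak D_j,\Psi_i]_q]=0$ as operators on $\mathcal X$.
   Context: Let $\mathbf{k}$ be a field of characteristic $0$, $q\in\mathbf{k}$ invertible and not a root of unity, $n\ge2$, $I=\{-n,\dots,-1,1,\dots,n\}$, $I^+=\{1,\dots,n\}$, $\lambda=q-q^{-1}$, $[m]_q=\frac{q^m-q^{-m}}{q-q^{-1}}$, $[A,B]_v=AB-vBA$, $[A,B]=[A,B]_1$. The quantum symplectic space $\mathcal X$ is the $\mathbf{k}$-algebra generated by $x_i$ ($i\in I$) with relations $x_jx_i=qx_ix_j$ for $i<j$, $j\neq-i$, and $x_ix_{-i}=q^2x_{-i}x_i+q^2\lambda\Omega_{i+1}$ ($i\in I^+$), $\Omega_i=\sum_{j=i}^nq^{j-i}x_{-j}x_j$, $\Omega_{n+1}=0$; normal monomials $x^a=x_{-n}^{a_{-n}}\cdots x_{-1}^{a_{-1}}x_1^{a_1}\cdots x_n^{a_n}$ form a basis. Linear operators: $\partial_i.x^a=[a_i]_qx^{a-\varepsilon_i}$, $x_{i_L}.f=x_if$, $x_{i_R}.f=fx_i$, $\mu_i^{\pm1}.x^a=q^{\pm a_i}x^a$ ($i\in I$); products are compositions (rightmost first). For $i\in I^+$: $\tau_i=\prod_{j=i}^n\mu_j$, $\tau_{-i}=\prod_{j=-n}^{-i}\mu_j$, $\tau_{\pm(n+1)}=1$, $\Lambda_0=1$, $\Lambda_{-i}=\prod_{j=-i}^{-1}\mu_j$, $\Lambda_i=\prod_{j=1}^i\mu_j$,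 $\mathfrak D_{-i}=\mu_i\tau_{-i-1}^{-1}\partial_{-i}$, $\mathfrak D_i=\tau_1^{-1}\Lambda_{i-1}^{-1}\partial_i$, $\mathfrak X_{-i_L}=\mu_i^{-1}\mu_{-i}x_{-i_L}$, $\mathfrak X_{i_R}=\Lambda_i^2x_{i_R}$, $\Psi_{n+1}=0$, $\Psi_i=\tau_{-i}^2\sum_{j=i}^nq^{j-i}\tau_{-j}^{-2}\mathfrak X_{-j_L}\mathfrak X_{j_R}$, and $\mathfrak X_{-i_R}=q^i\Lambda_{1-i}^2(\mu_i^2\mathfrak X_{-i_L}+\lambda\mu_{-i}^2\Psi_{i+1}\mathfrak D_i)$. *)

(* Defs.v *)
From HB Require Import structures.
From mathcomp Require Import all_boot all_order all_algebra.
Set Implicit Arguments. Unset Strict Implicit. Unset Printing Implicit Defensive.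
Import Order.TTheory GRing.Theory Num.Theory.
Local Open Scope ring_scope.

(* Index set I = {-n,...,-1,1,...,n} as integers, listed in the normal order
   -n < ... < -1 < 1 < ... < n. *)
Definition Iseq (n : nat) : seq int :=
  [seq - (k%:Z) | k <- rev (iota 1 n)] ++ [seq k%:Z | k <- iota 1 n].

Section QSymp.
Variables (k : fieldType) (A : algType k) (n : nat) (q : k).

Definition qlam : k := q - q^-1.
Definition qnum (m : nat) : k := (q ^+ m - q^-1 ^+ m) / (q - q^-1).

(* generators x_i (only i in I matter) *)
Variable x : int -> A.

Definition Omega (i : nat) : A :=
  \sum_(j <- iota i (n.+1 - i)) q ^+ (j - i) *: (x (- (j%:Z)) * x (j%:Z)).

Definition mono (a : int -> nat) : A := \prod_(i <- Iseq n) x i ^+ a i.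

Definition subeps (a : int -> nat) (i : int) : int -> nat :=
  fun j => if j == i then (a i).-1 else a j.

Definition qsymp_relations : Prop :=
  (forall i j, i \in Iseq n -> j \in Iseq n -> i < j -> j != - i ->
      x j * x i = q *: (x i * x j)) /\
  (forall i : nat, (1 <= i <= n)%N ->
      x (i%:Z) * x (- (i%:Z)) =
        q ^+ 2 *: (x (- (i%:Z)) * x (i%:Z)) + (q ^+ 2 * qlam) *: Omega i.+1).

Definition normal_monomials_basis : Prop :=
  (forall f : A, exists (m : nat) (a : 'I_m -> int -> nat) (c : 'I_m -> k),
      f = \sum_(u < m) c u *: mono (a u)) /\
  (forall (m : nat) (a : 'I_m -> int -> nat) (c : 'I_m -> k),
      (forall u v : 'I_m, u != v -> exists2 i, i \in Iseq n & a u i != a v i) ->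
      \sum_(u < m) c u *: mono (a u) = 0 -> forall u, c u = 0).

(* Basic operators: mu_i, mu_i^{-1}, partial_i, given by their (linear) action
   on normal monomials. *)
Variables (mu mui dp : int -> A -> A).

Definition basic_operators_spec : Prop :=
  forall i, i \in Iseq n ->
    [/\ linear (mu i), linear (mui i) & linear (dp i)] /\
    [/\ forall a, mu i (mono a) = q ^+ (a i) *: mono a,
        forall a, mui i (mono a) = q^-1 ^+ (a i) *: mono a &
        forall a, dp i (mono a) = qnum (a i) *: mono (subeps a i)].

(* operator algebra on A (operators are functions A -> A, products are
   compositions, rightmost first) *)
Definition sqop (F : A -> A) : A -> A := F \o F.
Definition muprod (m : int -> A -> A) (s : seq int) : A -> A :=
  foldr (fun j F => m j \o F) id s.
Definition Lmul (a : A) : A -> A := fun f => a * f.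
Definition Rmul (a : A) : A -> A := fun f => f * a.
Definition qcomm (v : k) (F G : A -> A) : A -> A :=
  fun f => F (G f) - v *: G (F f).

Definition tau_set (i : int) : seq int :=
  if 0 < i then [seq j <- Iseq n | i <= j] else [seq j <- Iseq n | j <= i].
Definition tau (i : int) := muprod mu (tau_set i).
Definition tauinv (i : int) := muprod mui (tau_set i).

Definition Lam_set (i : int) : seq int :=
  if 0 < i then [seq j <- Iseq n | (1 <= j) && (j <= i)]
  else [seq j <- Iseq n | (i <= j) && (j <= -1)].
Definition Lam (i : int) := muprod mu (Lam_set i).
Definition Laminv (i : int) := muprod mui (Lam_set i).

(* For i in I^+ (given as a nat 1 <= i <= n): *)
Definition Dneg (i : nat) : A -> A :=
  mu (i%:Z) \o tauinv (- (i%:Z) - 1) \o dp (- (i%:Z)).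
Definition Dpos (i : nat) : A -> A :=
  tauinv 1 \o Laminv (i%:Z - 1) \o dp (i%:Z).
Definition XLneg (i : nat) : A -> A :=
  mui (i%:Z) \o mu (- (i%:Z)) \o Lmul (x (- (i%:Z))).
Definition XRpos (i : nat) : A -> A :=
  sqop (Lam (i%:Z)) \o Rmul (x (i%:Z)).
Definition Psi (i : nat) : A -> A :=
  fun f => sqop (tau (- (i%:Z)))
    (\sum_(j <- iota i (n.+1 - i))
        q ^+ (j - i) *: sqop (tauinv (- (j%:Z))) (XLneg j (XRpos j f))).
Definition XRneg (i : nat) : A -> A :=
  fun f => q ^+ i *: sqop (Lam (1 - i%:Z))
    (sqop (mu (i%:Z)) (XLneg i f)
     + qlam *: sqop (mu (- (i%:Z))) (Psi i.+1 (Dpos i f))).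

End QSymp.

(* Main.v *)
Require Import Defs.
From HB Require Import structures.
From mathcomp Require Import all_boot all_order all_algebra.
From mathcomp Require Import zify ring.
From Stdlib Require Import FunctionalExtensionality.
Import Order.TTheory GRing.Theory Num.Theory.
Local Open Scope ring_scope.

Lemma Iseq_sorted n : sorted <%R (Iseq n).
Proof.
rewrite lt_sorted_pairwise /Iseq pairwise_cat; apply/and3P; split.
- apply/allrelP => u v /mapP[a /[!mem_rev] /[!mem_iota] ha ->] /mapP[b /[!mem_iota] hb ->].
  lia.
- rewrite pairwise_map -sorted_pairwise; last by move=> a b c /=; lia.
  rewrite rev_sorted; apply: sub_sorted (iota_ltn_sorted 1 n) => a b /=; lia.
- rewrite pairwise_map -sorted_pairwise; last by move=> a b c /=; lia.
  apply: sub_sorted (iota_ltn_sorted 1 n) => a b /=; lia.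
Qed.

Lemma Iseq_uniq n : uniq (Iseq n).
Proof. exact: (sorted_uniq lt_trans ltxx (Iseq_sorted n)). Qed.

Lemma mem_Iseq n (t : int) : (t \in Iseq n) = (t != 0) && (`|t|%N <= n)%N.
Proof.
rewrite /Iseq mem_cat; apply/orP/andP.
- case=> /mapP[b]; rewrite ?mem_rev mem_iota => hb ->; lia.
- case: t => [m|m] [h1 h2].
  + right; apply/mapP; exists m; rewrite ?mem_iota //; lia.
  + left; apply/mapP; exists m.+1; rewrite ?mem_rev ?mem_iota //; lia.
Qed.

Lemma sorted_split (s : seq int) p : sorted <%R s ->
  s = [seq t <- s | t < p] ++ [seq t <- s | t == p] ++ [seq t <- s | p < t].
Proof.
elim: s => //= h s IH Hs.
have Hs' := path_sorted Hs.
have Hall : all (fun t => h < t) s := order_path_min lt_trans Hs.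
have F0 : forall P : pred int, (forall t, h < t -> ~~ P t) -> [seq t <- s | P t] = [::].
  move=> P HP; apply/eqP; rewrite -size_eq0 size_filter -leqn0 leqNgt -has_count.
  apply/hasPn => t ts; apply: HP; exact: (allP Hall).
have Fall : [seq t <- s | h < t] = s by apply/all_filterP.
case: (ltgtP h p) => Hh.
- by rewrite /= {1}(IH Hs').
- rewrite /= (F0 (fun t => t < p)); last by move=> t ht; rewrite -leNgt; apply: ltW; apply: lt_trans ht.
  rewrite (F0 (fun t => t == p)); last by move=> t ht; apply/eqP => e; move: ht; rewrite e => /(lt_trans Hh); rewrite ltxx.
  rewrite /=; congr (_ :: _); apply/esym/all_filterP/allP => t /(allP Hall) ht; exact: lt_trans Hh ht.
- subst h; rewrite /= (F0 (fun t => t < p)); last by move=> t ht; rewrite -leNgt; apply: ltW.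
  rewrite (F0 (fun t => t == p)) ?Fall //; by move=> t ht; rewrite gt_eqF.
Qed.

Definition addE (a : int -> nat) (p : int) : int -> nat := fun t => (a t + (t == p))%N.
Definition ss (a : int -> nat) (s : seq int) : nat := (\sum_(t <- s) a t)%N.

Lemma ss_addE a p s : ss (addE a p) s = (ss a s + count_mem p s)%N.
Proof.
rewrite /ss /addE big_split /=; congr (_ + _)%N.
by elim: s => [|t s IH]; rewrite ?big_nil ?big_cons //= IH eq_sym.
Qed.

Lemma addEC a p r : addE (addE a p) r = addE (addE a r) p.
Proof. apply: functional_extensionality => t; rewrite /addE; lia. Qed.

Lemma subepsK a p : (0 < a p)%N -> addE (subeps a p) p = a.
Proof.
move=> h; apply: functional_extensionality => t; rewrite /addE /subeps.
by case: eqP => [->|_]; rewrite ?addn0 // addn1 prednK.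
Qed.

Lemma addEK a p : subeps (addE a p) p = a.
Proof.
apply: functional_extensionality => t; rewrite /addE /subeps.
by case: eqP => [->|_]; rewrite ?addn0 // eqxx addn1.
Qed.

Lemma subepsD a p r : p != r -> subeps (addE a p) r = addE (subeps a r) p.
Proof.
move=> ne; apply: functional_extensionality => t; rewrite /addE /subeps.
case: eqP => [->|_] //; by rewrite eq_sym (negbTE ne) !addn0.
Qed.

Section Main.
Variables (k : fieldType) (A : algType k) (n : nat) (q : k) (x : int -> A)
  (mu mui dp : int -> A -> A).
Hypothesis hq : q != 0.
Hypothesis Hrel : qsymp_relations n q x.
Hypothesis Hop : basic_operators_spec n q x mu mui dp.
Hypothesis hroot : forall m : nat, (0 < m)%N -> q ^+ m != 1.

Definition lin (f : A -> A) := forall (c : k) (u v : A), f (c *: u + v) = c *: f u + f v.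

Lemma lin0 f : lin f -> f 0 = 0.
Proof.
move=> H; have := H (-1) 0 0; rewrite scaler0 addr0 scaleN1r addNr; exact.
Qed.

Lemma linD f : lin f -> forall u v, f (u + v) = f u + f v.
Proof. by move=> H u v; have := H 1 u v; rewrite !scale1r. Qed.

Lemma linZ f : lin f -> forall c u, f (c *: u) = c *: f u.
Proof. by move=> H c u; have := H c u 0; rewrite !addr0 lin0 // addr0. Qed.

Lemma linB f : lin f -> forall u v, f (u - v) = f u - f v.
Proof. by move=> H u v; rewrite linD // -scaleN1r linZ // scaleN1r. Qed.

Lemma lin_sum f (I : Type) (r : seq I) (P : pred I) (F : I -> A) : lin f ->
  f (\sum_(i <- r | P i) F i) = \sum_(i <- r | P i) f (F i).
Proof.
move=> H; elim: r => [|a r IH]; first by rewrite !big_nil lin0.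
by rewrite !big_cons; case: (P a); rewrite ?linD // IH.
Qed.

Arguments lin0 {f}. Arguments linD {f}. Arguments linZ {f}. Arguments linB {f}. Arguments lin_sum {f I r P F}.

Lemma lin_comp f g : lin f -> lin g -> lin (f \o g).
Proof. by move=> Hf Hg c u v /=; rewrite Hg Hf. Qed.

Lemma lin_Lmul a : lin (Lmul a).
Proof. by move=> c u v; rewrite /Lmul mulrDr scalerAr. Qed.

Lemma lin_Rmul a : lin (Rmul a).
Proof. by move=> c u v; rewrite /Rmul mulrDl scalerAl. Qed.

Lemma lin_mu p : p \in Iseq n -> lin (mu p).
Proof. by move=> hp; case: (Hop p hp) => -[H _ _] _ c u v; apply: H. Qed.
Lemma lin_mui p : p \in Iseq n -> lin (mui p).
Proof. by move=> hp; case: (Hop p hp) => -[_ H _] _ c u v; apply: H. Qed.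
Lemma lin_dp p : p \in Iseq n -> lin (dp p).
Proof. by move=> hp; case: (Hop p hp) => -[_ _ H] _ c u v; apply: H. Qed.

Lemma lin_muprod (m : int -> A -> A) s : (forall p, p \in Iseq n -> lin (m p)) ->
  all (fun t => t \in Iseq n) s -> lin (muprod m s).
Proof.
move=> Hm; elim: s => [|p s IH] /=; first by move=> _ c u v.
case/andP=> hp hs; exact: lin_comp (Hm _ hp) (IH hs).
Qed.

Lemma lin_sqop f : lin f -> lin (sqop f).
Proof. by move=> H; apply: lin_comp. Qed.

Arguments lin_sqop {f}.
Local Notation mono := (mono n x).
Definition LT p := [seq t <- Iseq n | t < p].
Definition GT p := [seq t <- Iseq n | p < t].

Lemma mono_ext v w : (forall t, v t = w t) -> mono v = mono w.
Proof. by move=> H; rewrite (functional_extensionality v w H). Qed.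

Lemma mono_split a p : p \in Iseq n ->
  mono a = (\prod_(t <- LT p) x t ^+ a t) * x p ^+ a p *
           \prod_(t <- GT p) x t ^+ a t.
Proof.
move=> hp; rewrite /Defs.mono {1}(@sorted_split (Iseq n) p (Iseq_sorted n)) big_cat big_cat.
have -> : [seq t <- Iseq n | t == p] = [:: p] by exact: (filter_pred1_uniq (Iseq_uniq n) hp).
rewrite big_seq1; exact: mulrA.
Qed.

Lemma mono_addE a p : p \in Iseq n ->
  mono (addE a p) = (\prod_(t <- LT p) x t ^+ a t) * x p ^+ (a p).+1 *
           \prod_(t <- GT p) x t ^+ a t.
Proof.
move=> hp; rewrite (mono_split _ _ hp) /addE eqxx addn1; congr (_ * _ * _).
- by apply: eq_big_seq => t; rewrite mem_filter => /andP[/lt_eqF -> _]; rewrite addn0.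
- by apply: eq_big_seq => t; rewrite mem_filter => /andP[/gt_eqF -> _]; rewrite addn0.
Qed.

Lemma commX p t m : x p * x t = q *: (x t * x p) ->
  x p * x t ^+ m = q ^+ m *: (x t ^+ m * x p).
Proof.
move=> H; elim: m => [|m IH]; first by rewrite !expr0 mulr1 mul1r scale1r.
by rewrite [in LHS]exprS mulrA H -scalerAl -[in LHS]mulrA IH -scalerAr scalerA mulrA -!exprS.
Qed.

Lemma commXR p t m : x t * x p = q *: (x p * x t) ->
  x t ^+ m * x p = q ^+ m *: (x p * x t ^+ m).
Proof.
move=> H; elim: m => [|m IH]; first by rewrite !expr0 mulr1 mul1r scale1r.
by rewrite [in LHS]exprSr -mulrA H -scalerAr mulrA IH -scalerAl scalerA -mulrA -exprSr -exprS.
Qed.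

Lemma commL p (s : seq int) (e : int -> nat) :
  (forall t, t \in s -> x p * x t = q *: (x t * x p)) ->
  x p * \prod_(t <- s) x t ^+ e t = q ^+ (\sum_(t <- s) e t)%N *: (\prod_(t <- s) x t ^+ e t * x p).
Proof.
elim: s => [|t s IH] H; first by rewrite !big_nil mulr1 mul1r expr0 scale1r.
rewrite !big_cons mulrA commX; last by apply: H; rewrite mem_head.
rewrite -scalerAl -[in LHS]mulrA IH; last by move=> u us; apply: H; rewrite in_cons us orbT.
by rewrite -scalerAr scalerA -exprD [in LHS]mulrA.
Qed.

Lemma commR p (s : seq int) (e : int -> nat) :
  (forall t, t \in s -> x t * x p = q *: (x p * x t)) ->
  \prod_(t <- s) x t ^+ e t * x p = q ^+ (\sum_(t <- s) e t)%N *: (x p * \prod_(t <- s) x t ^+ e t).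
Proof.
elim: s => [|t s IH] H; first by rewrite !big_nil mulr1 mul1r expr0 scale1r.
rewrite !big_cons -mulrA IH; last by move=> u us; apply: H; rewrite in_cons us orbT.
rewrite -scalerAr [in LHS]mulrA commXR; last by apply: H; rewrite mem_head.
by rewrite -scalerAl scalerA -exprD -[in LHS]mulrA addnC.
Qed.


Lemma Lmul_mono (l : nat) a : (1 <= l <= n)%N ->
  Lmul (x (- l%:Z)) (mono a) = q ^+ ss a (LT (- l%:Z)) *: mono (addE a (- l%:Z)).
Proof.
move=> hl; have hp : - l%:Z \in Iseq n by rewrite mem_Iseq; lia.
rewrite /Lmul (mono_split _ _ hp) (mono_addE _ _ hp) !mulrA commL.
- by rewrite -!scalerAl exprS !mulrA.
move=> t; rewrite mem_filter => /andP[ht tI].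
apply: (Hrel.1 t (- l%:Z) tI hp ht); move: ht; rewrite mem_Iseq in tI; lia.
Qed.

Lemma Rmul_mono (l : nat) a : (1 <= l <= n)%N ->
  Rmul (x l%:Z) (mono a) = q ^+ ss a (GT l%:Z) *: mono (addE a l%:Z).
Proof.
move=> hl; have hp : l%:Z \in Iseq n by rewrite mem_Iseq; lia.
rewrite /Rmul (mono_split _ _ hp) (mono_addE _ _ hp) -!mulrA commR.
- by rewrite !scalerAr exprSr !mulrA.
move=> t; rewrite mem_filter => /andP[ht tI].
apply: (Hrel.1 (l%:Z) t hp tI ht); move: ht; rewrite mem_Iseq in tI; lia.
Qed.


Definition Q (z : int) : k := q ^ z.

Lemma QD a b : Q (a + b) = Q a * Q b.
Proof. exact: expfzDr. Qed.
Lemma Qn m : q ^+ m = Q m%:Z.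
Proof. by rewrite /Q exprnP. Qed.
Lemma QVn m : q^-1 ^+ m = Q (- m%:Z).
Proof. by rewrite /Q exprVn exprnP invr_expz. Qed.
Lemma Q1 : q = Q 1.
Proof. by rewrite /Q expr1z. Qed.
Lemma Q0 : Q 0 = 1.
Proof. by rewrite /Q expr0z. Qed.

Definition TS z := tau_set n z.
Definition LS z := Lam_set n z.

Lemma memIp (l : nat) : (1 <= l <= n)%N -> l%:Z \in Iseq n.
Proof. by move=> h; rewrite mem_Iseq; lia. Qed.
Arguments memIp {l}.
Lemma memIn (l : nat) : (1 <= l <= n)%N -> - l%:Z \in Iseq n.
Proof. by move=> h; rewrite mem_Iseq; lia. Qed.

Arguments memIn {l}.
Lemma cntF (P : pred int) p : p \in Iseq n ->
  count_mem p [seq t <- Iseq n | P t] = P p.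
Proof.
move=> hp; rewrite count_filter.
have -> : count (predI (pred1 p) P) (Iseq n) = (P p * count_mem p (Iseq n))%N.
  elim: (Iseq n) => [|t s IH] /=; first by rewrite muln0.
  rewrite IH; case: (t =P p) => [->|ne] /=; first by case: (P p) => //=; rewrite mul1n.
  by rewrite add0n.
by rewrite (count_uniq_mem _ (Iseq_uniq n)) hp muln1.
Qed.

Lemma cnt_tau p z : p \in Iseq n -> count_mem p (TS z) =
  (((0 < z) && (z <= p)) || (~~ (0 < z) && (p <= z))).
Proof. by move=> hp; rewrite /TS /tau_set; case: ifP => h; rewrite cntF //= ?orbF. Qed.

Lemma cnt_Lam p z : p \in Iseq n -> count_mem p (LS z) =
  (((0 < z) && (1 <= p) && (p <= z)) || (~~ (0 < z) && (z <= p) && (p <= -1))).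
Proof. by move=> hp; rewrite /LS /Lam_set; case: ifP => h; rewrite cntF //= ?orbF. Qed.

Lemma cnt_LT p r : p \in Iseq n -> count_mem p (LT r) = (p < r).
Proof. exact: cntF. Qed.
Lemma cnt_GT p r : p \in Iseq n -> count_mem p (GT r) = (r < p).
Proof. exact: cntF. Qed.

Lemma TS_sub z : all (fun t => t \in Iseq n) (TS z).
Proof. by rewrite /TS /tau_set; case: ifP => _; apply/allP => t; rewrite mem_filter => /andP[]. Qed.
Lemma LS_sub z : all (fun t => t \in Iseq n) (LS z).
Proof. by rewrite /LS /Lam_set; case: ifP => _; apply/allP => t; rewrite mem_filter => /andP[]. Qed.

Lemma mu_mono p a : p \in Iseq n -> mu p (mono a) = Q (a p) *: mono a.
Proof. by move=> hp; case: (Hop p hp) => _ [-> _ _]; rewrite Qn. Qed.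
Lemma mui_mono p a : p \in Iseq n -> mui p (mono a) = Q (- (a p)%:Z) *: mono a.
Proof. by move=> hp; case: (Hop p hp) => _ [_ -> _]; rewrite QVn. Qed.
Lemma dp_mono p a : p \in Iseq n -> dp p (mono a) = qnum q (a p) *: mono (subeps a p).
Proof. by move=> hp; case: (Hop p hp) => _ [_ _ ->]. Qed.

Lemma muprod_mono s a : all (fun t => t \in Iseq n) s ->
  muprod mu s (mono a) = Q (ss a s) *: mono a.
Proof.
elim: s => [|p s IH] /=; first by rewrite /ss big_nil Q0 scale1r.
case/andP=> hp hs; rewrite IH // (linZ (lin_mu _ hp)) mu_mono // scalerA -QD.
by rewrite /ss big_cons PoszD addrC.
Qed.

Lemma muiprod_mono s a : all (fun t => t \in Iseq n) s ->
  muprod mui s (mono a) = Q (- (ss a s)%:Z) *: mono a.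
Proof.
elim: s => [|p s IH] /=; first by rewrite /ss big_nil Q0 scale1r.
case/andP=> hp hs; rewrite IH // (linZ (lin_mui _ hp)) mui_mono // scalerA -QD.
by rewrite /ss big_cons PoszD opprD addrC.
Qed.

Lemma lin_tau z : lin (tau n mu z).
Proof. apply: lin_muprod (TS_sub z); exact: lin_mu. Qed.
Lemma lin_tauinv z : lin (tauinv n mui z).
Proof. apply: lin_muprod (TS_sub z); exact: lin_mui. Qed.
Lemma lin_Lam z : lin (Lam n mu z).
Proof. apply: lin_muprod (LS_sub z); exact: lin_mu. Qed.
Lemma lin_Laminv z : lin (Laminv n mui z).
Proof. apply: lin_muprod (LS_sub z); exact: lin_mui. Qed.

Lemma tau_mono z a : tau n mu z (mono a) = Q (ss a (TS z)) *: mono a.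
Proof. exact: muprod_mono (TS_sub z). Qed.
Lemma tauinv_mono z a : tauinv n mui z (mono a) = Q (- (ss a (TS z))%:Z) *: mono a.
Proof. exact: muiprod_mono (TS_sub z). Qed.
Lemma Lam_mono z a : Lam n mu z (mono a) = Q (ss a (LS z)) *: mono a.
Proof. exact: muprod_mono (LS_sub z). Qed.
Lemma Laminv_mono z a : Laminv n mui z (mono a) = Q (- (ss a (LS z))%:Z) *: mono a.
Proof. exact: muiprod_mono (LS_sub z). Qed.

Lemma sqop_mono (f : A -> A) e a : lin f -> (forall b, f (mono b) = Q (e b) *: mono b) ->
  sqop f (mono a) = Q (e a + e a) *: mono a.
Proof. by move=> Hl He; rewrite /sqop /= He (linZ Hl) He scalerA -QD. Qed.
Arguments sqop_mono {f e a}.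

Lemma XRpos_mono (l : nat) a : (1 <= l <= n)%N ->
  XRpos n x mu l (mono a) =
  Q (ss a (GT l%:Z) + (ss (addE a l%:Z) (LS l%:Z) + ss (addE a l%:Z) (LS l%:Z))) *: mono (addE a l%:Z).
Proof.
move=> hl; rewrite /XRpos /= Rmul_mono // Qn (linZ (lin_sqop (lin_Lam _))).
by rewrite (sqop_mono (lin_Lam _) (fun b => Lam_mono _ b)) scalerA -QD.
Qed.

Lemma XLneg_mono (l : nat) a : (1 <= l <= n)%N ->
  XLneg x mu mui l (mono a) =
  Q ((ss a (LT (- l%:Z)))%:Z + (addE a (- l%:Z) (- l%:Z))%:Z - (addE a (- l%:Z) l%:Z)%:Z) *: mono (addE a (- l%:Z)).
Proof.
move=> hl; have hn := memIn hl; have hp := memIp hl.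
rewrite /XLneg /= Lmul_mono // Qn (linZ (lin_mu _ hn)) mu_mono //.
rewrite scalerA (linZ (lin_mui _ hp)) mui_mono // scalerA -!QD.
by congr (Q _ *: _); lia.
Qed.


Fact qn_key : unit. Proof. exact: tt. Qed.
Definition qn := locked_with qn_key (qnum q).
Lemma qnE c : qnum q c = qn c.
Proof. by rewrite /qn unlock. Qed.
Lemma qnum0 : qnum q 0 = 0.
Proof. by rewrite /qnum !expr0 subrr mul0r. Qed.
Lemma qn0 : qn 0 = 0.
Proof. by rewrite -qnE qnum0. Qed.

Lemma lin_scale c f : lin f -> lin (fun u => c *: f u).
Proof. by move=> H d u v; rewrite H scalerDr !scalerA mulrC. Qed.

Lemma lin_XRpos (l : nat) : (1 <= l <= n)%N -> lin (XRpos n x mu l).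
Proof. by move=> hl; apply: lin_comp; [apply: lin_sqop; apply: lin_Lam | apply: lin_Rmul]. Qed.

Lemma lin_XLneg (l : nat) : (1 <= l <= n)%N -> lin (XLneg x mu mui l).
Proof.
move=> hl; apply: lin_comp; last exact: lin_Lmul.
by apply: lin_comp; [apply: lin_mui; apply: memIp | apply: lin_mu; apply: memIn].
Qed.

Arguments lin_XRpos {l}. Arguments lin_XLneg {l}.

Definition Phi (i l : nat) : A -> A := fun f =>
  sqop (tau n mu (- i%:Z)) (sqop (tauinv n mui (- l%:Z)) (XLneg x mu mui l (XRpos n x mu l f))).
Definition D (j : nat) := Dpos n mui dp j.
Definition P1 (j : nat) : A -> A := fun f =>
  q ^+ j *: sqop (Lam n mu (1 - j%:Z)) (sqop (mu j%:Z) (XLneg x mu mui j f)).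
Definition Qm (j m : nat) : A -> A := fun f =>
  sqop (Lam n mu (1 - j%:Z)) (sqop (mu (- j%:Z)) (Phi j.+1 m (D j f))).

Lemma lin_Phi i l : (1 <= l <= n)%N -> lin (Phi i l).
Proof.
move=> hl; rewrite /Phi => c u v.
rewrite (lin_XRpos hl) (lin_XLneg hl) (lin_sqop (lin_tauinv _)).
by rewrite (lin_sqop (lin_tau _)).
Qed.

Arguments lin_Phi i {l}.

Lemma lin_D j : (1 <= j <= n)%N -> lin (D j).
Proof.
move=> hj; apply: lin_comp; last by apply: lin_dp; apply: memIp.
apply: lin_comp; [exact: lin_tauinv | exact: lin_Laminv].
Qed.

Arguments lin_D {j}.

Lemma lin_P1 j : (1 <= j <= n)%N -> lin (P1 j).
Proof.
move=> hj; rewrite /P1; apply: (@lin_scale _ (fun f => sqop (Lam n mu (1 - j%:Z)) (sqop (mu j%:Z) (XLneg x mu mui j f)))).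
move=> c u v /=; rewrite (lin_XLneg hj) (lin_sqop (lin_mu _ (memIp hj))).
by rewrite (lin_sqop (lin_Lam _)).
Qed.

Lemma lin_Qm j m : (1 <= j <= n)%N -> (1 <= m <= n)%N -> lin (Qm j m).
Proof.
move=> hj hm c u v; rewrite /Qm (lin_D hj) (lin_Phi _ hm) (lin_sqop (lin_mu _ (memIn hj))).
by rewrite (lin_sqop (lin_Lam _)).
Qed.

Arguments lin_P1 {j}. Arguments lin_Qm {j m}.

Definition xlE (l : nat) a : int :=
  (ss a (LT (- l%:Z)))%:Z + (addE a (- l%:Z) (- l%:Z))%:Z - (addE a (- l%:Z) l%:Z)%:Z.
Definition xrE (l : nat) a : int :=
  (ss a (GT l%:Z))%:Z + ((ss (addE a l%:Z) (LS l%:Z))%:Z + (ss (addE a l%:Z) (LS l%:Z))%:Z).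
Definition phiE (i l : nat) a : int :=
  xrE l a + xlE l (addE a l%:Z)
  + (- (ss (addE (addE a l%:Z) (- l%:Z)) (TS (- l%:Z)))%:Z - (ss (addE (addE a l%:Z) (- l%:Z)) (TS (- l%:Z)))%:Z)
  + ((ss (addE (addE a l%:Z) (- l%:Z)) (TS (- i%:Z)))%:Z + (ss (addE (addE a l%:Z) (- l%:Z)) (TS (- i%:Z)))%:Z).
Definition dE (j : nat) b : int :=
  - (ss b (LS (j%:Z - 1)))%:Z - (ss b (TS 1))%:Z.
Definition p1E (j : nat) a : int :=
  j%:Z + xlE j a + ((addE a (- j%:Z) j%:Z)%:Z + (addE a (- j%:Z) j%:Z)%:Z)
  + ((ss (addE a (- j%:Z)) (LS (1 - j%:Z)))%:Z + (ss (addE a (- j%:Z)) (LS (1 - j%:Z)))%:Z).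
Definition qmE (j m : nat) b : int :=
  dE j b + phiE j.+1 m b
  + ((addE (addE b m%:Z) (- m%:Z) (- j%:Z))%:Z + (addE (addE b m%:Z) (- m%:Z) (- j%:Z))%:Z)
  + ((ss (addE (addE b m%:Z) (- m%:Z)) (LS (1 - j%:Z)))%:Z + (ss (addE (addE b m%:Z) (- m%:Z)) (LS (1 - j%:Z)))%:Z).

Definition kjE (i j : nat) a : int :=
  phiE i j a + dE j (addE a (- j%:Z)) - (a j%:Z)%:Z.

Lemma Phi_mono i l a : (1 <= l <= n)%N ->
  Phi i l (mono a) = Q (phiE i l a) *: mono (addE (addE a l%:Z) (- l%:Z)).
Proof.
move=> hl; rewrite /Phi XRpos_mono // (linZ (lin_XLneg hl)) XLneg_mono // scalerA -QD.
rewrite (linZ (lin_sqop (lin_tauinv _))) (sqop_mono (lin_tauinv _) (fun b => tauinv_mono _ b)).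
rewrite scalerA -QD (linZ (lin_sqop (lin_tau _))) (sqop_mono (lin_tau _) (fun b => tau_mono _ b)).
by rewrite scalerA -QD; congr (Q _ *: _); rewrite /phiE; lia.
Qed.

Lemma D_mono j a : (1 <= j <= n)%N ->
  D j (mono a) = (qn (a j%:Z) * Q (dE j (subeps a j%:Z))) *: mono (subeps a j%:Z).
Proof.
move=> hj; rewrite /D /Dpos /= dp_mono ?memIp // (linZ (lin_Laminv _)) Laminv_mono.
rewrite scalerA (linZ (lin_tauinv _)) tauinv_mono scalerA /dE QD.
by rewrite qnE; congr (_ *: _); ring.
Qed.

Lemma P1_mono j a : (1 <= j <= n)%N ->
  P1 j (mono a) = Q (p1E j a) *: mono (addE a (- j%:Z)).
Proof.
move=> hj; rewrite /P1 XLneg_mono // (linZ (lin_sqop (lin_mu _ (memIp hj)))).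
rewrite (sqop_mono (lin_mu _ (memIp hj)) (fun b => mu_mono _ b (memIp hj))).
rewrite scalerA -QD (linZ (lin_sqop (lin_Lam _))) (sqop_mono (lin_Lam _) (fun b => Lam_mono _ b)).
by rewrite !scalerA Qn -!QD; congr (Q _ *: _); rewrite /p1E /xlE; lia.
Qed.

Lemma Qm_mono j m a : (1 <= j <= n)%N -> (1 <= m <= n)%N ->
  Qm j m (mono a) = (qn (a j%:Z) * Q (qmE j m (subeps a j%:Z))) *:
     mono (addE (addE (subeps a j%:Z) m%:Z) (- m%:Z)).
Proof.
move=> hj hm; rewrite /Qm D_mono // (linZ (lin_Phi _ hm)) Phi_mono //.
rewrite !(linZ (lin_sqop (lin_mu _ (memIn hj)))).
rewrite (sqop_mono (lin_mu _ (memIn hj)) (fun b => mu_mono _ b (memIn hj))).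
rewrite !(linZ (lin_sqop (lin_Lam _))) (sqop_mono (lin_Lam _) (fun b => Lam_mono _ b)).
rewrite !scalerA; congr (_ *: _); rewrite /qmE !QD; ring.
Qed.


Lemma QQ a b : Q a * Q b = Q (a + b).
Proof. by rewrite QD. Qed.
Lemma QQA (X : k) a b : X * Q a * Q b = X * Q (a + b).
Proof. by rewrite -mulrA QQ. Qed.
Lemma QnC c e : qn c * Q e = Q e * qn c.
Proof. exact: mulrC. Qed.
Lemma QnCA (X : k) c e : X * qn c * Q e = X * Q e * qn c.
Proof. exact: mulrAC. Qed.
Lemma qmul (X : k) : q * X = Q 1 * X.
Proof. by rewrite -Q1. Qed.

Lemma fin0 e1 e2 : e1 = e2 -> Q e1 = Q e2.
Proof. by move=> ->. Qed.
Lemma fin1 e1 e2 c1 c2 : e1 = e2 -> c1 = c2 -> Q e1 * qn c1 = Q e2 * qn c2.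
Proof. by move=> -> ->. Qed.
Lemma fin2 e1 e2 c1 c2 d1 d2 : e1 = e2 -> c1 = c2 -> d1 = d2 ->
  Q e1 * qn c1 * qn d1 = Q e2 * qn c2 * qn d2.
Proof. by move=> -> -> ->. Qed.

Ltac gather := rewrite ?qmul ?mulrA; do 8 (rewrite ?QQA ?QQ ?QnCA ?QnC).

Lemma D0 j a : (1 <= j <= n)%N -> a j%:Z = 0%N -> D j (mono a) = 0.
Proof. by move=> hj h; rewrite D_mono // h qn0 mul0r scale0r. Qed.

Lemma C1 i j l a : (1 <= i)%N -> (i <= j)%N -> (j < l)%N -> (l <= n)%N ->
  D j (Phi i l (mono a)) = q *: Phi i l (D j (mono a)).
Proof.
move=> h1 h2 h3 h4.
have hj : (1 <= j <= n)%N by lia.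
have hl : (1 <= l <= n)%N by lia.
have Ijp := memIp hj; have Ijn := memIn hj; have Ilp := memIp hl; have Iln := memIn hl.
case: (posnP (a j%:Z)) => [a0|apos].
  rewrite Phi_mono // (linZ (lin_D hj)) D0 //; last by rewrite /addE; lia.
  by rewrite scaler0 D0 // (lin0 (lin_Phi _ hl)) scaler0.
have [b ->] : exists b, a = addE b j%:Z by exists (subeps a j%:Z); rewrite subepsK.
rewrite Phi_mono // (linZ (lin_D hj)) D_mono // D_mono // (linZ (lin_Phi _ hl)) Phi_mono //.
rewrite subepsD; last by lia.
rewrite subepsD; last by lia.
rewrite !addEK.
rewrite !scalerA; congr (_ *: _).
gather.
apply: fin1.
rewrite /phiE /dE /xlE /xrE !ss_addE /addE !cnt_LT ?cnt_GT ?cnt_tau ?cnt_Lam //.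
lia.
rewrite /addE; lia.
Qed.


Lemma scal_eq (c1 c2 : k) v w : c1 = c2 -> (forall t, v t = w t) -> c1 *: mono v = c2 *: mono w.
Proof. by move=> -> /mono_ext ->. Qed.

Ltac unsub := repeat (rewrite ?addEK; (rewrite subepsD; last by lia)); rewrite ?addEK.
Lemma cTSp p z : (1 <= p <= n)%N -> count_mem (p%:Z) (TS (- z%:Z)) = 0%N.
Proof. by move=> h; rewrite cnt_tau ?memIp //; lia. Qed.
Lemma cTSn p z : (1 <= p <= n)%N -> count_mem (- p%:Z) (TS (- z%:Z)) = (z <= p)%N.
Proof. by move=> h; rewrite cnt_tau ?memIn //; lia. Qed.
Lemma cTS1p p : (1 <= p <= n)%N -> count_mem (p%:Z) (TS 1) = 1%N.
Proof. by move=> h; rewrite cnt_tau ?memIp //; lia. Qed.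
Lemma cTS1n p : (1 <= p <= n)%N -> count_mem (- p%:Z) (TS 1) = 0%N.
Proof. by move=> h; rewrite cnt_tau ?memIn //; lia. Qed.
Lemma cLSjp p z : (1 <= p <= n)%N -> (1 <= z)%N -> count_mem (p%:Z) (LS (z%:Z - 1)) = (p < z)%N.
Proof. by move=> h h'; rewrite cnt_Lam ?memIp //; lia. Qed.
Lemma cLSjn p z : (1 <= p <= n)%N -> (1 <= z)%N -> count_mem (- p%:Z) (LS (z%:Z - 1)) = 0%N.
Proof. by move=> h h'; rewrite cnt_Lam ?memIn //; lia. Qed.
Lemma cLS1p p z : (1 <= p <= n)%N -> (1 <= z)%N -> count_mem (p%:Z) (LS (1 - z%:Z)) = 0%N.
Proof. by move=> h h'; rewrite cnt_Lam ?memIp //; lia. Qed.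
Lemma cLS1n p z : (1 <= p <= n)%N -> (1 <= z)%N -> count_mem (- p%:Z) (LS (1 - z%:Z)) = (p < z)%N.
Proof. by move=> h h'; rewrite cnt_Lam ?memIn //; lia. Qed.
Lemma cLSp p z : (1 <= p <= n)%N -> (1 <= z)%N -> count_mem (p%:Z) (LS z%:Z) = (p <= z)%N.
Proof. by move=> h h'; rewrite cnt_Lam ?memIp //; lia. Qed.
Lemma cLSn p z : (1 <= p <= n)%N -> (1 <= z)%N -> count_mem (- p%:Z) (LS z%:Z) = 0%N.
Proof. by move=> h h'; rewrite cnt_Lam ?memIn //; lia. Qed.
Lemma cLTp p z : (1 <= p <= n)%N -> count_mem (p%:Z) (LT (- z%:Z)) = 0%N.
Proof. by move=> h; rewrite cnt_LT ?memIp //; lia. Qed.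
Lemma cLTn p z : (1 <= p <= n)%N -> count_mem (- p%:Z) (LT (- z%:Z)) = (z < p)%N.
Proof. by move=> h; rewrite cnt_LT ?memIn //; lia. Qed.
Lemma cGTp p z : (1 <= p <= n)%N -> count_mem (p%:Z) (GT z%:Z) = (z < p)%N.
Proof. by move=> h; rewrite cnt_GT ?memIp //; lia. Qed.
Lemma cGTn p z : (1 <= p <= n)%N -> count_mem (- p%:Z) (GT z%:Z) = 0%N.
Proof. by move=> h; rewrite cnt_GT ?memIn //; lia. Qed.
Lemma eqpn (p r : nat) : (1 <= p)%N -> (p%:Z == - r%:Z) = false.
Proof. move=> h; apply/eqP; lia. Qed.
Lemma eqnp (p r : nat) : (1 <= r)%N -> (- p%:Z == r%:Z) = false.
Proof. move=> h; apply/eqP; lia. Qed.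

Ltac evb := repeat match goal with |- context[nat_of_bool ?b] =>
  lazymatch b with true => fail | false => fail | _ =>
  first [ have -> : b = true by lia | have -> : b = false by lia ] end end.
Ltac expo := rewrite ?/kjE ?/qmE ?/p1E ?/phiE ?/xrE ?/xlE ?/dE ?ss_addE /addE
  ?cTSp ?cTSn ?cTS1p ?cTS1n ?cLSjp ?cLSjn ?cLS1p ?cLS1n ?cLSp ?cLSn ?cLTp ?cLTn ?cGTp ?cGTn
  ?eqr_opp ?eqz_nat ?eqpn ?eqnp //; rewrite ?eqxx ?leqnn ?ltnn; lia.
Ltac ptw := let t := fresh "t" in move=> t; rewrite /addE; lia.

Lemma Qm0 j m a : (1 <= j <= n)%N -> (1 <= m <= n)%N -> a j%:Z = 0%N -> Qm j m (mono a) = 0.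
Proof. by move=> hj hm h; rewrite Qm_mono // h qn0 mul0r scale0r. Qed.

Section Checks.
Variables (i j l : nat).
Hypotheses (h1 : (1 <= i)%N) (h2 : (i <= l)%N) (h3 : (l < j)%N) (h4 : (j <= n)%N).

Let hj : (1 <= j <= n)%N. Proof. lia. Qed.
Let hl : (1 <= l <= n)%N. Proof. lia. Qed.

Lemma Ca a : P1 j (D j (Phi i l (mono a))) = D j (Phi i l (P1 j (mono a))).
Proof.
have Ijp := memIp hj; have Ijn := memIn hj; have Ilp := memIp hl; have Iln := memIn hl.
have l1 : (1 <= l)%N by lia. have j1 : (1 <= j)%N by lia.
case: (posnP (a j%:Z)) => [a0|apos].
  rewrite Phi_mono // (linZ (lin_D hj)) D0 //; last by rewrite /addE; lia.
  rewrite scaler0 (lin0 (lin_P1 hj)) P1_mono // (linZ (lin_Phi _ hl)) Phi_mono //.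
  rewrite !(linZ (lin_D hj)) D0 //; last by rewrite /addE; lia.
  by rewrite !scaler0.
have [b ->] : exists b, a = addE b j%:Z by exists (subeps a j%:Z); rewrite subepsK.
rewrite Phi_mono // (linZ (lin_D hj)) D_mono // !(linZ (lin_P1 hj)) P1_mono //.
rewrite P1_mono // (linZ (lin_Phi _ hl)) Phi_mono // !(linZ (lin_D hj)) D_mono //.
unsub.
rewrite !scalerA; apply: scal_eq; last by ptw.
gather; apply: fin1; expo.
Qed.

Lemma Cb a : P1 j (Phi i l (D j (mono a))) = Phi i l (D j (P1 j (mono a))).
Proof.
have Ijp := memIp hj; have Ijn := memIn hj; have Ilp := memIp hl; have Iln := memIn hl.
have l1 : (1 <= l)%N by lia. have j1 : (1 <= j)%N by lia.
case: (posnP (a j%:Z)) => [a0|apos].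
  rewrite D0 // (lin0 (lin_Phi _ hl)) (lin0 (lin_P1 hj)) P1_mono //.
  rewrite (linZ (lin_D hj)) D0 //; last by rewrite /addE; lia.
  by rewrite scaler0 (lin0 (lin_Phi _ hl)).
have [b ->] : exists b, a = addE b j%:Z by exists (subeps a j%:Z); rewrite subepsK.
rewrite D_mono // (linZ (lin_Phi _ hl)) Phi_mono // !(linZ (lin_P1 hj)) P1_mono //.
rewrite P1_mono // (linZ (lin_D hj)) D_mono // !(linZ (lin_Phi _ hl)) Phi_mono //.
unsub.
rewrite !scalerA; apply: scal_eq; last by ptw.
gather; apply: fin1; expo.
Qed.

Variable m : nat.
Hypotheses (h5 : (j < m)%N) (h6 : (m <= n)%N).
Let hm : (1 <= m <= n)%N. Proof. lia. Qed.

Lemma Cc a : Qm j m (D j (Phi i l (mono a))) = D j (Phi i l (Qm j m (mono a))).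
Proof.
have Ijp := memIp hj; have Ijn := memIn hj; have Ilp := memIp hl; have Iln := memIn hl.
have Imp := memIp hm; have Imn := memIn hm.
have l1 : (1 <= l)%N by lia. have j1 : (1 <= j)%N by lia. have m1 : (1 <= m)%N by lia.
case: (posnP (a j%:Z)) => [a0|apos].
  rewrite Phi_mono // (linZ (lin_D hj)) D0 //; last by rewrite /addE; lia.
  by rewrite scaler0 (lin0 (lin_Qm hj hm)) Qm0 // (lin0 (lin_Phi _ hl)) (lin0 (lin_D hj)).
have [b ->] : exists b, a = addE b j%:Z by exists (subeps a j%:Z); rewrite subepsK.
case: (posnP (b j%:Z)) => [b0|bpos].
  rewrite Phi_mono // (linZ (lin_D hj)) D_mono //; unsub.
  rewrite !(linZ (lin_Qm hj hm)) Qm0 //; last by rewrite /addE; lia.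
  rewrite scaler0 Qm_mono //; unsub.
  rewrite (linZ (lin_Phi _ hl)) Phi_mono // !(linZ (lin_D hj)) D0 //; last by rewrite /addE; lia.
  by rewrite !scaler0.
have [c ->] : exists c, b = addE c j%:Z by exists (subeps b j%:Z); rewrite subepsK.
rewrite Phi_mono // (linZ (lin_D hj)) D_mono //; unsub.
rewrite !(linZ (lin_Qm hj hm)) Qm_mono //; unsub.
rewrite Qm_mono //; unsub.
rewrite !(linZ (lin_Phi _ hl)) Phi_mono // !(linZ (lin_D hj)) D_mono //; unsub.
rewrite !scalerA; apply: scal_eq; last by ptw.
gather; apply: fin2; expo.
Qed.

Lemma Cd a : Qm j m (Phi i l (D j (mono a))) = Phi i l (D j (Qm j m (mono a))).
Proof.
have Ijp := memIp hj; have Ijn := memIn hj; have Ilp := memIp hl; have Iln := memIn hl.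
have Imp := memIp hm; have Imn := memIn hm.
have l1 : (1 <= l)%N by lia. have j1 : (1 <= j)%N by lia. have m1 : (1 <= m)%N by lia.
case: (posnP (a j%:Z)) => [a0|apos].
  rewrite D0 // (lin0 (lin_Phi _ hl)) (lin0 (lin_Qm hj hm)) Qm0 //.
  by rewrite (lin0 (lin_D hj)) (lin0 (lin_Phi _ hl)).
have [b ->] : exists b, a = addE b j%:Z by exists (subeps a j%:Z); rewrite subepsK.
case: (posnP (b j%:Z)) => [b0|bpos].
  rewrite D_mono //; unsub.
  rewrite (linZ (lin_Phi _ hl)) Phi_mono // !(linZ (lin_Qm hj hm)) Qm0 //; last by rewrite /addE; lia.
  rewrite !scaler0 Qm_mono //; unsub.
  rewrite (linZ (lin_D hj)) D0 //; last by rewrite /addE; lia.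
  by rewrite scaler0 (lin0 (lin_Phi _ hl)).
have [c ->] : exists c, b = addE c j%:Z by exists (subeps b j%:Z); rewrite subepsK.
rewrite D_mono //; unsub.
rewrite (linZ (lin_Phi _ hl)) Phi_mono // !(linZ (lin_Qm hj hm)) Qm_mono //; unsub.
rewrite Qm_mono //; unsub.
rewrite !(linZ (lin_D hj)) D_mono //; unsub.
rewrite !(linZ (lin_Phi _ hl)) Phi_mono //.
rewrite !scalerA; apply: scal_eq; last by ptw.
gather; apply: fin2; expo.
Qed.

End Checks.


Lemma qlam0 : q - q^-1 != 0.
Proof.
apply/eqP => h; move: (hroot 2 isT); rewrite expr2.
have : q = q^-1 by apply/eqP; rewrite -subr_eq0 h.
by move=> e; rewrite {2}e mulfV // eqxx.
Qed.

Lemma qn_id c : qn c.+1 - Q 1 * qn c = Q (- c%:Z).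
Proof.
rewrite -!qnE -QVn -Q1 /qnum !exprS.
have hl := qlam0.
field; rewrite hq /= -expr2 subr_eq0; exact: hroot 2 isT.
Qed.

Lemma finK (e1 e2 e3 : int) c1 c2 (c : nat) : c1 = c.+1 -> c2 = c -> e2 = e1 + 1 -> e3 = e1 - c%:Z ->
  Q e1 * qn c1 - Q e2 * qn c2 = Q e3.
Proof.
move=> -> -> -> ->; rewrite QD -mulrA -mulrBr qn_id -QD.
by rewrite addrC.
Qed.

Lemma finK0 (e1 e2 : int) c : e1 = e2 -> c = 1%N -> Q e1 * qn c = Q e2.
Proof.
move=> -> ->; rewrite -qnE /qnum !expr1 mulfV ?mulr1 //; exact: qlam0.
Qed.

Definition K (i j l : nat) : A -> A := fun f => D j (Phi i l f) - q *: Phi i l (D j f).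

Lemma lin_K i j l : (1 <= j <= n)%N -> (1 <= l <= n)%N -> lin (K i j l).
Proof.
move=> hj hl c u v; rewrite /K (lin_Phi _ hl) (lin_D hj) (lin_D hj) (lin_Phi _ hl).
rewrite scalerDr scalerA [q * c]mulrC -scalerA scalerBr opprD addrACA.
by [].
Qed.

Arguments lin_K i {j l}.

Section Checks2.
Variables (i j : nat).
Hypotheses (h1 : (1 <= i)%N) (h2 : (i <= j)%N) (h3 : (j <= n)%N).

Let hj : (1 <= j <= n)%N. Proof. lia. Qed.

Lemma Kj_mono a : K i j j (mono a) = Q (kjE i j a) *: mono (addE a (- j%:Z)).
Proof.
have Ijp := memIp hj; have Ijn := memIn hj. have j1 : (1 <= j)%N by lia.
rewrite /K.
case: (posnP (a j%:Z)) => [a0|apos].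
  rewrite (D0 _ a) // (lin0 (lin_Phi _ hj)) scaler0 subr0.
  rewrite Phi_mono // (linZ (lin_D hj)) D_mono //; unsub.
  rewrite scalerA; apply: scal_eq; last by ptw.
  gather; apply: finK0; expo.
have [b ->] : exists b, a = addE b j%:Z by exists (subeps a j%:Z); rewrite subepsK.
rewrite Phi_mono // (linZ (lin_D hj)) D_mono //; unsub.
rewrite D_mono //; unsub.
rewrite (linZ (lin_Phi _ hj)) Phi_mono //.
rewrite !scalerA -scalerBl; apply: scal_eq; last by ptw.
gather; apply: (@finK _ _ _ _ _ (b j%:Z).+1); expo.
Qed.

Lemma Ce a : P1 j (K i j j (mono a)) = K i j j (P1 j (mono a)).
Proof.
have Ijp := memIp hj; have Ijn := memIn hj. have j1 : (1 <= j)%N by lia.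
rewrite Kj_mono (linZ (lin_P1 hj)) P1_mono // P1_mono // (linZ (lin_K i hj hj)) Kj_mono.
rewrite !scalerA; apply: scal_eq; last by ptw.
gather; apply: fin0; expo.
Qed.

Variable m : nat.
Hypotheses (h4 : (j < m)%N) (h5 : (m <= n)%N).
Let hm : (1 <= m <= n)%N. Proof. lia. Qed.

Lemma Cf a : Qm j m (K i j j (mono a)) = K i j j (Qm j m (mono a)).
Proof.
have Ijp := memIp hj; have Ijn := memIn hj; have Imp := memIp hm; have Imn := memIn hm.
have j1 : (1 <= j)%N by lia. have m1 : (1 <= m)%N by lia.
case: (posnP (a j%:Z)) => [a0|apos].
  rewrite Kj_mono (linZ (lin_Qm hj hm)) Qm0 //; last by rewrite /addE; lia.
  by rewrite scaler0 Qm0 // (lin0 (lin_K i hj hj)).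
have [b ->] : exists b, a = addE b j%:Z by exists (subeps a j%:Z); rewrite subepsK.
rewrite Kj_mono (linZ (lin_Qm hj hm)) Qm_mono //; unsub.
rewrite Qm_mono //; unsub.
rewrite (linZ (lin_K i hj hj)) Kj_mono.
rewrite !scalerA; apply: scal_eq; last by ptw.
gather; apply: fin1; expo.
Qed.

End Checks2.


Hypothesis Hb : normal_monomials_basis n x.

Lemma ext_mono F G : lin F -> lin G -> (forall a, F (mono a) = G (mono a)) -> forall f, F f = G f.
Proof.
move=> hF hG H f; case: Hb => [Hs _]; have [m [a [c ->]]] := Hs f.
rewrite (lin_sum hF) (lin_sum hG); apply: eq_bigr => u _.
by rewrite (linZ hF) (linZ hG) H.
Qed.

Lemma lin_addf F G : lin F -> lin G -> lin (fun f => F f + G f).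
Proof.
move=> hF hG c u v; rewrite hF hG scalerDr.
by rewrite addrACA.
Qed.

Lemma lin_subf F G : lin F -> lin G -> lin (fun f => F f - G f).
Proof.
move=> hF hG c u v; rewrite hF hG scalerBr opprD.
by rewrite addrACA.
Qed.

Lemma lin_sumf (I : eqType) (r : seq I) (F : I -> A -> A) :
  (forall m, m \in r -> lin (F m)) -> lin (fun f => \sum_(m <- r) F m f).
Proof.
elim: r => [|t r IH] H /=.
  by move=> c u v; rewrite !big_nil scaler0 addr0.
move=> c u v; rewrite !big_cons H ?mem_head // IH; last by move=> m hm; apply: H; rewrite in_cons hm orbT.
by rewrite scalerDr addrACA.
Qed.

Lemma Kzero i j l f : (1 <= i)%N -> (i <= j)%N -> (j < l)%N -> (l <= n)%N -> K i j l f = 0.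
Proof.
move=> h1 h2 h3 h4.
have hj : (1 <= j <= n)%N by lia. have hl : (1 <= l <= n)%N by lia.
apply: (@ext_mono (K i j l) (fun _ => 0)).
- exact: lin_K.
- by move=> c u v; rewrite scaler0 addr0.
- move=> a; rewrite /K C1 //; exact: subrr.
Qed.

Lemma PK i j l f : (1 <= i)%N -> (i <= j)%N -> (j <= n)%N -> (i <= l)%N -> (l <= n)%N ->
  P1 j (K i j l f) = K i j l (P1 j f).
Proof.
move=> h1 h2 h3 h4 h5.
have hj : (1 <= j <= n)%N by lia. have hl : (1 <= l <= n)%N by lia.
case: (ltngtP j l) => hjl.
- by rewrite Kzero // (lin0 (lin_P1 hj)) Kzero.
- apply: (@ext_mono (fun f => P1 j (K i j l f) ) (fun f => K i j l (P1 j f))).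
  + exact: lin_comp (lin_P1 hj) (lin_K i hj hl).
  + exact: lin_comp (lin_K i hj hl) (lin_P1 hj).
  + move=> a; rewrite /K (linB (lin_P1 hj)) (linZ (lin_P1 hj)) Ca // Cb //.
- subst l; apply: (@ext_mono (fun f => P1 j (K i j j f) ) (fun f => K i j j (P1 j f))).
  + exact: lin_comp (lin_P1 hj) (lin_K i hj hj).
  + exact: lin_comp (lin_K i hj hj) (lin_P1 hj).
  + move=> a; exact: Ce.
Qed.

Lemma QK i j l m f : (1 <= i)%N -> (i <= j)%N -> (j < m)%N -> (m <= n)%N -> (i <= l)%N -> (l <= n)%N ->
  Qm j m (K i j l f) = K i j l (Qm j m f).
Proof.
move=> h1 h2 h3 h4 h5 h6.
have hj : (1 <= j <= n)%N by lia. have hl : (1 <= l <= n)%N by lia. have hm : (1 <= m <= n)%N by lia.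
have jn : (j <= n)%N by lia.
case: (ltngtP j l) => hjl.
- by rewrite Kzero // (lin0 (lin_Qm hj hm)) Kzero.
- apply: (@ext_mono (fun f => Qm j m (K i j l f) ) (fun f => K i j l (Qm j m f))).
  + exact: lin_comp (lin_Qm hj hm) (lin_K i hj hl).
  + exact: lin_comp (lin_K i hj hl) (lin_Qm hj hm).
  + move=> a; rewrite /K (linB (lin_Qm hj hm)) (linZ (lin_Qm hj hm)) Cc // Cd //.
- subst l; apply: (@ext_mono (fun f => Qm j m (K i j j f) ) (fun f => K i j j (Qm j m f))).
  + exact: lin_comp (lin_Qm hj hm) (lin_K i hj hj).
  + exact: lin_comp (lin_K i hj hj) (lin_Qm hj hm).
  + move=> a; exact: Cf.
Qed.

Lemma Psi_dec i g : Psi n q x mu mui i g =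
  \sum_(l <- iota i (n.+1 - i)) q ^+ (l - i) *: Phi i l g.
Proof.
rewrite /Psi (lin_sum (lin_sqop (lin_tau _))); apply: eq_bigr => l _.
by rewrite (linZ (lin_sqop (lin_tau _))).
Qed.

Lemma XR_dec j f : (1 <= j <= n)%N -> XRneg n q x mu mui dp j f =
  P1 j f + \sum_(m <- iota j.+1 (n.+1 - j.+1)) (q ^+ j * qlam q * q ^+ (m - j.+1)) *: Qm j m f.
Proof.
move=> hj; rewrite /XRneg Psi_dec.
rewrite (linD (lin_sqop (lin_Lam _))) scalerDr; congr (_ + _).
rewrite (linZ (lin_sqop (lin_Lam _))) (lin_sum (lin_sqop (lin_mu _ (memIn hj)))).
rewrite (lin_sum (lin_sqop (lin_Lam _))) !scaler_sumr; apply: eq_bigr => m _.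
rewrite (linZ (lin_sqop (lin_mu _ (memIn hj)))) (linZ (lin_sqop (lin_Lam _))) !scalerA.
by rewrite mulrA.
Qed.

Lemma lin_XR j : (1 <= j <= n)%N -> lin (XRneg n q x mu mui dp j).
Proof.
move=> hj c u v; rewrite !XR_dec //.
have H : lin (fun f => P1 j f + \sum_(m <- iota j.+1 (n.+1 - j.+1)) (q ^+ j * qlam q * q ^+ (m - j.+1)) *: Qm j m f).
  apply: lin_addf; first exact: lin_P1.
  apply: lin_sumf => m; rewrite mem_iota => hm; apply: lin_scale; apply: lin_Qm; lia.
exact: H.
Qed.

Arguments lin_XR {j}.

Lemma XK i j l f : (1 <= i)%N -> (i <= j)%N -> (j <= n)%N -> (i <= l)%N -> (l <= n)%N ->
  XRneg n q x mu mui dp j (K i j l f) = K i j l (XRneg n q x mu mui dp j f).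
Proof.
move=> h1 h2 h3 h4 h5.
have hj : (1 <= j <= n)%N by lia. have hl : (1 <= l <= n)%N by lia.
rewrite !XR_dec // (linD (lin_K i hj hl)) (lin_sum (lin_K i hj hl)) PK //; congr (_ + _).
apply: eq_big_seq => m; rewrite mem_iota => hm.
rewrite (linZ (lin_K i hj hl)) QK //; lia.
Qed.

Lemma C_dec i j f : (1 <= j <= n)%N -> (1 <= i)%N ->
  qcomm q (Dpos n mui dp j) (Psi n q x mu mui i) f =
  \sum_(l <- iota i (n.+1 - i)) q ^+ (l - i) *: K i j l f.
Proof.
move=> hj hi; rewrite /qcomm !Psi_dec.
have -> : Dpos n mui dp j = D j by [].
rewrite (lin_sum (lin_D hj)) scaler_sumr -sumrB; apply: eq_big_seq => l.
rewrite mem_iota => hl.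
have hl' : (1 <= l <= n)%N by lia.
rewrite (linZ (lin_D hj)) /K scalerBr !scalerA mulrC.
by [].
Qed.

Lemma main_sec i j f : (1 <= i)%N -> (i <= j)%N -> (j <= n)%N ->
  qcomm 1 (XRneg n q x mu mui dp j) (qcomm q (Dpos n mui dp j) (Psi n q x mu mui i)) f = 0.
Proof.
move=> h1 h2 h3.
have hj : (1 <= j <= n)%N by lia.
have -> : forall (F G : A -> A) g, qcomm 1 F G g = F (G g) - G (F g).
  by move=> F G g; rewrite /qcomm scale1r.
rewrite !C_dec // (lin_sum (lin_XR hj)).
under eq_bigr => l _ do rewrite (linZ (lin_XR hj)).
rewrite [X in _ - X](eq_big_seq (fun l => q ^+ (l - i) *: XRneg n q x mu mui dp j (K i j l f))).
  exact: subrr.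
move=> l; rewrite mem_iota => hl.
by rewrite XK //; lia.
Qed.

End Main.

Theorem corollary5p5
  (k : fieldType) (A : algType k) (n : nat) (q : k)
  (x : int -> A) (mu mui dp : int -> A -> A) :
  [pchar k] =i pred0 ->
  q != 0 ->
  (forall m : nat, (0 < m)%N -> q ^+ m != 1) ->
  (2 <= n)%N ->
  qsymp_relations n q x ->
  normal_monomials_basis n x ->
  basic_operators_spec n q x mu mui dp ->
  forall i j : nat, (1 <= i)%N -> (i <= j)%N -> (j <= n)%N ->
  forall f : A,
    qcomm 1 (XRneg n q x mu mui dp j)
            (qcomm q (Dpos n mui dp j) (Psi n q x mu mui i)) f = 0.
Proof.
move=> _ hq hroot _ Hrel Hb Hop i j h1 h2 h3 f.
exact: (@main_sec k A n q x mu mui dp hq Hrel Hop hroot Hb i j f h1 h2 h3).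
Qed.
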